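(* Let $\widetilde\Delta$ be a graph without isolated vertices, let $\ell:D(\widetilde\Delta)\to N$ be a voltage assignment, and let $\widetilde\Gamma$ be the lift of $\widetilde\Delta$ with respect to $\ell$. Then the following are equivalent: (i) for all $u,v,w\in V(\widetilde\Delta)$ with $u\sim v$ and $v\perp w$ we have $\ell(w,u)=\ell(w,v)$; (ii) for all $(u,m),(v,n)\in V(\widetilde\Gamma)$, we have $(u,m)\sim(v,n)$ if and only if $m=n$ and $u\sim v$.
   Context: Graphs are simple and undirected; $u\perp v$ denotes adjacency and $D(\Delta)$ is the set of darts (ordered pairs of adjacent vertices). A voltage assignment is a map $\ell:D(\Delta)\to N$ into a group with $\ell(u,v)=\ell(v,u)^{-1}$; the lift has vertex set $V(\Delta)\times N$ with $(u,m)\perp(v,n)$ iff $u\perp v$ and $\ell(u,v)=mn^{-1}$. In any graph, $u\sim v$ means that $u$ and $v$ have the same set of neighbours. *)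

(* Defs.v *)
From mathcomp Require Import all_boot all_fingroup.
Set Implicit Arguments. Unset Strict Implicit. Unset Printing Implicit Defensive.
Local Open Scope group_scope.

Definition simple_graph (V : finType) (e : rel V) : Prop :=
  symmetric e /\ irreflexive e.

Definition no_isolated (V : finType) (e : rel V) : Prop :=
  forall u, exists v, e u v.

(* Voltage assignment: defined on darts (u,v) with u adjacent to v;
   values on non-darts are irrelevant. *)
Definition voltage (V : finType) (e : rel V) (N : finGroupType)
  (l : V -> V -> N) : Prop :=
  forall u v, e u v -> l u v = (l v u)^-1.

Definition lift_adj (V : finType) (e : rel V) (N : finGroupType)
  (l : V -> V -> N) : rel (V * N) :=
  fun x y => e x.1 y.1 && (l x.1 y.1 == x.2 * y.2^-1).

(* x ~ y : same set of neighbours. *)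
Definition same_nbhd (T : Type) (r : rel T) (x y : T) : Prop :=
  forall z, r x z = r y z.

(* Main.v *)
Require Import Defs.
From mathcomp Require Import all_boot all_fingroup.
Local Open Scope group_scope.

Theorem lemma2p4 (V : finType) (e : rel V) (N : finGroupType)
  (l : V -> V -> N) :
  simple_graph e -> no_isolated e -> voltage e l ->
  ((forall u v w : V, same_nbhd e u v -> e v w -> l w u = l w v) <->
   (forall (u : V) (m : N) (v : V) (n : N),
      same_nbhd (lift_adj e l) (u, m) (v, n) <-> (m = n /\ same_nbhd e u v))).
Proof.
move=> _ noi vol; split.
- move=> Hi u m v n.
  have key : forall u v w, same_nbhd e u v -> e v w -> l u w = l v w.
    move=> a b c Hab Hbc.
    have Hac : e a c by rewrite Hab.
    by rewrite (vol _ _ Hac) (vol _ _ Hbc) (Hi a b c Hab Hbc).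
  split.
  + move=> H.
    have step : forall a b x y, same_nbhd (lift_adj e l) (a, x) (b, y) ->
        forall w, e a w -> e b w /\ x * ((l a w)^-1 * x)^-1 = l a w
                   /\ l b w = y * ((l a w)^-1 * x)^-1.
      move=> a b x y Hs w Haw.
      have h1 : x * ((l a w)^-1 * x)^-1 = l a w by rewrite invMg invgK mulgA mulgV mul1g.
      have := Hs (w, (l a w)^-1 * x).
      rewrite /lift_adj /= Haw h1 eqxx /= => /esym/andP[-> /eqP ->]; split=> //.
    have Huv : same_nbhd e u v.
      move=> w; apply/idP/idP => Hw.
      * by case: (step _ _ _ _ H w Hw).
      * have H' : same_nbhd (lift_adj e l) (v, n) (u, m) by move=> z; rewrite H.
        by case: (step _ _ _ _ H' w Hw).
    split=> //.
    case: (noi u) => w Huw.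
    case: (step _ _ _ _ H w Huw) => Hvw [h1 h2].
    by apply: (mulIg ((l u w)^-1 * m)^-1); rewrite h1 -h2 (key u v w Huv Hvw).
  + case=> <- Huv [w k]; rewrite /lift_adj /=.
    case Hvw: (e v w); first by rewrite Huv Hvw (key u v w Huv Hvw).
    by rewrite Huv Hvw.
- move=> Hii u v w Huv Hvw.
  have H : same_nbhd (lift_adj e l) (u, 1) (v, 1) by apply/Hii.
  have := H (w, (l v w)^-1).
  rewrite /lift_adj /= Hvw mul1g invgK eqxx /= => /andP[Huw /eqP Heq].
  by rewrite -[l w u]invgK -(vol _ _ Huw) -[l w v]invgK -(vol _ _ Hvw) Heq.
Qed.
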